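(* Let $R$ be a commutative ring with identity and $M$ a non-zero comultiplication $R$-module such that $G'(M)$ is non-null. The following are equivalent: (i) $G'(M)$ is not connected; (ii) $|\mathrm{Min}(M)|=2$; (iii) $G'(M)$ is the disjoint union of two complete subgraphs $G'_1$ and $G'_2$ with no edges between them.
   Context: An $R$-module $M$ is a comultiplication module if for every submodule $N$ of $M$ there is an ideal $I$ of $R$ with $N=\mathrm{Ann}_M(I)$. A submodule $N$ of $M$ is large if $N\cap L\neq 0$ for every non-zero submodule $L$ of $M$. $\mathrm{Min}(M)$ is the set of minimal submodules of $M$. The large sum graph $G'(M)$ has as vertex set the set of all non-zero non-large submodules of $M$, and two distinct vertices $N,K$ are adjacent iff $N+K$ is non-large in $M$. *)

(* Defs.v *)
(* Modules are [lmodType R] over a commutative ring [R];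
   submodules and ideals are Prop-valued subsets (the module may be infinite). *)
From HB Require Import structures.
From mathcomp Require Import all_boot all_order all_algebra.
From Stdlib Require Import Relations.
Set Implicit Arguments. Unset Strict Implicit. Unset Printing Implicit Defensive.
Import GRing.Theory.
Local Open Scope ring_scope.

Section Defs.
Variables (R : comPzRingType) (M : lmodType R).

Definition subset (A B : M -> Prop) := forall x, A x -> B x.
Definition seteq (A B : M -> Prop) := forall x, A x <-> B x.

Definition is_submodule (N : M -> Prop) : Prop :=
  N 0 /\ (forall x y, N x -> N y -> N (x + y)) /\ (forall (r : R) x, N x -> N (r *: x)).

Definition is_ideal (I : R -> Prop) : Prop :=
  I 0 /\ (forall a b, I a -> I b -> I (a + b)) /\ (forall r a, I a -> I (r * a)).

Definition annM (I : R -> Prop) : M -> Prop := fun m => forall r, I r -> r *: m = 0.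

Definition comultiplication_module : Prop :=
  forall N, is_submodule N -> exists I, is_ideal I /\ seteq N (annM I).

Definition nonzero_sub (N : M -> Prop) : Prop := exists x, N x /\ x <> 0.

Definition module_nonzero : Prop := exists x : M, x <> 0.

Definition is_large (N : M -> Prop) : Prop :=
  forall L, is_submodule L -> nonzero_sub L -> exists x, N x /\ L x /\ x <> 0.

Definition is_minimal (N : M -> Prop) : Prop :=
  is_submodule N /\ nonzero_sub N /\
  forall L, is_submodule L -> nonzero_sub L -> subset L N -> seteq L N.

Definition sum_sub (N K : M -> Prop) : M -> Prop :=
  fun x => exists a b, N a /\ K b /\ x = a + b.

Definition vertex (N : M -> Prop) : Prop :=
  is_submodule N /\ nonzero_sub N /\ ~ is_large N.

Definition adj (N K : M -> Prop) : Prop :=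
  vertex N /\ vertex K /\ ~ seteq N K /\ ~ is_large (sum_sub N K).

Definition graph_nonnull : Prop := exists N, vertex N.

(* vertices are identified up to set equality *)
Definition step (N K : M -> Prop) : Prop :=
  vertex N /\ vertex K /\ (seteq N K \/ adj N K).

Definition graph_connected : Prop :=
  forall N K, vertex N -> vertex K -> clos_refl_trans (M -> Prop) step N K.

Definition two_minimal : Prop :=
  exists A B, is_minimal A /\ is_minimal B /\ ~ seteq A B /\
    forall N, is_minimal N -> seteq N A \/ seteq N B.

Definition two_complete_components : Prop :=
  exists V1 V2 : (M -> Prop) -> Prop,
    (exists N, V1 N) /\ (exists N, V2 N) /\
    (forall N, V1 N -> vertex N) /\ (forall N, V2 N -> vertex N) /\
    (forall N, vertex N -> V1 N \/ V2 N) /\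
    (forall N K, V1 N -> V2 K -> ~ seteq N K) /\
    (forall N K, V1 N -> V1 K -> ~ seteq N K -> adj N K) /\
    (forall N K, V2 N -> V2 K -> ~ seteq N K -> adj N K) /\
    (forall N K, V1 N -> V2 K -> ~ adj N K).
End Defs.

(* Main.v *)
Require Import Defs.
From mathcomp Require Import all_boot all_order all_algebra.
From Stdlib Require Import Classical Relations.
From mathcomp Require classical_sets boolp.

Module ZW.
Import classical_sets.
Local Open Scope classical_set_scope.
Lemma zorn_sets (T:Type) (P : (T->Prop) -> Prop) :
  (forall F : (T -> Prop) -> Prop, (forall X, F X -> P X) ->
     (forall X Y, F X -> F Y -> (forall t, X t -> Y t) \/ (forall t, Y t -> X t)) ->
     P (fun t => exists X, F X /\ X t)) ->
  exists A, P A /\ forall B, P B -> (forall t, A t -> B t) -> forall t, B t -> A t.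
Proof.
move=> H.
have [] := @Zorn_bigcup T P.
  move=> F FP Ftot.
  have := H F FP Ftot.
  suff -> : (fun t => exists X, F X /\ X t) = \bigcup_(X in F) X by [].
  apply: boolp.funext => t; apply: boolp.propext; split; first by case=> X [? ?]; exists X.
  by case=> X ? ?; exists X.
move=> A [PA Amax].
exists A; split=> // B PB AB t Bt.
apply: NNPP => nAt.
apply: (Amax B) => //; split; first exact: AB.
by move=> BA; apply: nAt; apply: BA.
Qed.
End ZW.

Set Implicit Arguments. Unset Strict Implicit. Unset Printing Implicit Defensive.
Import GRing.Theory.
Local Open Scope ring_scope.

Section Main.
Variables (R : comPzRingType) (M : lmodType R).
Hypothesis HC : comultiplication_module M.

Lemma scalerC (r s : R) (v : M) : r *: (s *: v) = s *: (r *: v).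
Proof. by rewrite !scalerA mulrC. Qed.

Definition cyc (x : M) : M -> Prop := fun y => exists r, y = r *: x.

Lemma cyc_sub x : is_submodule (cyc x).
Proof.
split; first by exists 0; rewrite scale0r.
split; first by move=> y z [r ->] [s ->]; exists (r + s); rewrite scalerDl.
by move=> r y [s ->]; exists (r * s); rewrite scalerA.
Qed.

Lemma cyc_le (N : M -> Prop) x : is_submodule N -> N x -> Defs.subset (cyc x) N.
Proof. by move=> [_ [_ HN]] Nx y [r ->]; apply: HN. Qed.

Lemma min_cyc (S : M -> Prop) x : is_minimal S -> S x -> x <> 0 -> Defs.subset S (cyc x).
Proof.
move=> [SS [_ Smin]] Sx x0 y Sy.
have nz : nonzero_sub (cyc x) by exists x; split=> //; exists 1; rewrite scale1r.
have H := Smin (cyc x) (cyc_sub x) nz (cyc_le SS Sx).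
by apply/(H y).
Qed.

Lemma sum_submodule (N K : M -> Prop) : is_submodule N -> is_submodule K -> is_submodule (sum_sub N K).
Proof.
move=> [N0 [ND NZ]] [K0 [KD KZ]].
split; first by exists 0, 0; rewrite addr0.
split.
  move=> x y [a [b [Na [Kb ->]]]] [c [d [Nc [Kd ->]]]].
  exists (a + c), (b + d); split; first exact: ND.
  split; first exact: KD.
  by rewrite addrACA.
move=> r x [a [b [Na [Kb ->]]]]; exists (r *: a), (r *: b).
by split; [exact: NZ|split; [exact: KZ|rewrite scalerDr]].
Qed.

Lemma sum_l (N K : M -> Prop) : is_submodule K -> Defs.subset N (sum_sub N K).
Proof. by move=> [K0 _] x Nx; exists x, 0; rewrite addr0. Qed.

Lemma sum_r (N K : M -> Prop) : is_submodule N -> Defs.subset K (sum_sub N K).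
Proof. by move=> [N0 _] x Kx; exists 0, x; rewrite add0r. Qed.

Lemma not_in_annM (I : R -> Prop) (x : M) : ~ annM I x -> exists a, I a /\ a *: x <> 0.
Proof.
move=> H; apply: NNPP => H2; apply: H => r Ir.
by apply: NNPP => H3; apply: H2; exists r.
Qed.

Lemma P_sum (S N K : M -> Prop) : is_minimal S -> is_submodule N -> is_submodule K ->
  Defs.subset S (sum_sub N K) -> Defs.subset S N \/ Defs.subset S K.
Proof.
move=> Smin SN SK HS; apply: NNPP => /not_or_and [nN nK].
have [s [Ss nNs]] : exists s, S s /\ ~ N s.
  by apply: NNPP => H; apply: nN => y Sy; apply: NNPP => ny; apply: H; exists y.
have [s' [Ss' nKs']] : exists s, S s /\ ~ K s.
  by apply: NNPP => H; apply: nK => y Sy; apply: NNPP => ny; apply: H; exists y.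
have [I [_ EI]] := HC SN.
have [J [_ EJ]] := HC SK.
have [a [Ia as0]] : exists a, I a /\ a *: s <> 0.
  by apply: not_in_annM => H; apply: nNs; apply/EI.
have [b [Jb bs0]] : exists b, J b /\ b *: s' <> 0.
  by apply: not_in_annM => H; apply: nKs'; apply/EJ.
have kill : forall y, S y -> (a * b) *: y = 0.
  move=> y /HS [n [k [Nn [Kk ->]]]].
  rewrite scalerDr -!scalerA scalerC.
  have -> : a *: n = 0 by apply: (proj1 (EI n) Nn).
  have -> : b *: k = 0 by apply: (proj1 (EJ k) Kk).
  by rewrite !scaler0 addr0.
have Sas : S (a *: s) by case: Smin => [[_ [_ HS3]] _]; apply: HS3.
move: bs0; have [r ->] := min_cyc Smin Sas as0 Ss'.
by rewrite (scalerC b r) (scalerA b a) (mulrC b a) kill // scaler0.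
Qed.

Lemma exists_min (N : M -> Prop) : is_submodule N -> nonzero_sub N ->
  exists S, is_minimal S /\ Defs.subset S N.
Proof.
move=> SN [x [Nx x0]].
pose Ann := fun r : R => r *: x = 0.
pose P := fun I : R -> Prop => ~ I 1 /\ (forall a b, I a -> I b -> I (a + b)) /\
  (forall r a, I a -> I (r * a)) /\ ((exists a, I a) -> forall r, Ann r -> I r).
have [m [Pm mmax]] : exists m, P m /\
    forall B, P B -> (forall t, m t -> B t) -> forall t, B t -> m t.
  apply: ZW.zorn_sets => F FP Ftot.
  split; first by case=> X [FX X1]; case: (FP X FX).
  split.
    move=> a b [X [FX Xa]] [Y [FY Yb]].
    case: (Ftot X Y FX FY) => XY.
      exists Y; split=> //; have [_ [HD _]] := FP Y FY; apply: HD => //; exact: XY.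
    exists X; split=> //; have [_ [HD _]] := FP X FX; apply: HD => //; exact: XY.
  split.
    move=> r a [X [FX Xa]]; exists X; split=> //; have [_ [_ [HM _]]] := FP X FX; exact: HM.
  move=> [a [X [FX Xa]]] r Ar; exists X; split=> //; have [_ [_ [_ HA]]] := FP X FX.
  by apply: HA => //; exists a.
have [m1 [mD [mM mA]]] := Pm.
have PAnn : P Ann.
  split; first by rewrite /Ann scale1r.
  split; first by move=> a b; rewrite /Ann scalerDl => -> ->; rewrite addr0.
  split; first by move=> r a; rewrite /Ann -scalerA => ->; rewrite scaler0.
  by move=> _ r.
have Annm : forall r, Ann r -> m r.
  case: (classic (exists a, m a)) => [H|H]; first exact: mA.
  move=> r Ar; apply: (mmax Ann PAnn) => // t mt; case: H; by exists t.
pose S := fun y => cyc x y /\ forall a, m a -> a *: y = 0.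
exists S; split; last by move=> y [Cy _]; exact: (cyc_le SN Nx Cy).
have SS : is_submodule S.
  split; first by split; [exists 0; rewrite scale0r | move=> a _; rewrite scaler0].
  split.
    move=> y z [Cy Ky] [Cz Kz]; split; first by have [_ [HD _]] := cyc_sub x; exact: HD.
    by move=> a ma; rewrite scalerDr Ky // Kz // addr0.
  move=> r y [Cy Ky]; split; first by have [_ [_ HZ]] := cyc_sub x; exact: HZ.
  by move=> a ma; rewrite scalerC Ky // scaler0.
split=> //.
split.
  apply: NNPP => Hz.
  have S0 : forall y, S y -> y = 0.
    move=> y Sy; apply: NNPP => y0; apply: Hz; by exists y.
  pose Q := fun y => exists a, m a /\ y = a *: x.
  have SQ : is_submodule Q.
    split; first by exists 0; split; [apply: Annm; rewrite /Ann scale0r | rewrite scale0r].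
    split.
      move=> y z [a [ma ->]] [b [mb ->]]; exists (a + b); split; [exact: mD | by rewrite scalerDl].
    move=> r y [a [ma ->]]; exists (r * a); split; [exact: mM | by rewrite scalerA].
  have [I [_ EI]] := HC SQ.
  have Qx : Q x.
    apply/(EI x) => r Ir.
    apply: S0; split; first by exists r.
    move=> a ma; rewrite scalerC.
    by apply: (proj1 (EI (a *: x)) _ r Ir); exists a.
  case: Qx => a [ma xa].
  apply: m1.
  have -> : (1 : R) = a + (1 - a) by rewrite addrCA subrr addr0.
  apply: mD => //; apply: Annm; rewrite /Ann scalerBl scale1r -xa subrr //.
move=> L SL [y [Ly y0]] LS y'; split; first by apply: LS.
move=> Sy'.
pose J := fun r => forall z, L z -> r *: z = 0.
have PJ : P J.
  split; first by move=> H; apply: y0; rewrite -(scale1r y); apply: H.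
  split; first by move=> a b Ja Jb z Lz; rewrite scalerDl Ja // Jb // addr0.
  split; first by move=> r a Ja z Lz; rewrite -scalerA Ja // scaler0.
  move=> _ r Ar z Lz; have [[s ->] _] := LS z Lz; by rewrite scalerC Ar scaler0.
have mJ : forall t, m t -> J t by move=> t mt z Lz; have [_ K] := LS z Lz; exact: K.
have [I [_ EI]] := HC SL.
apply/(EI y') => r Ir.
have Jr : J r by move=> z Lz; exact: (proj1 (EI z) Lz r Ir).
have := mmax J PJ mJ r Jr.
by case: Sy' => _ K; apply: K.
Qed.

Lemma min_le_eq (S T : M -> Prop) : is_minimal S -> is_minimal T ->
  Defs.subset T S -> seteq T S.
Proof. by move=> [_ [_ H]] [TS [TN _]] TsS; apply: H. Qed.

Lemma nonlarge_miss (X A : M -> Prop) : is_submodule X -> is_minimal A ->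
  ~ Defs.subset A X -> ~ is_large X.
Proof.
move=> SX Am nAX HL; have Am' := Am; case: Am' => [SA [NA _]].
have [x [Xx [Ax x0]]] := HL A SA NA.
apply: nAX => t At.
have [r ->] := min_cyc Am Ax x0 At.
by case: SX => [_ [_ HZ]]; apply: HZ.
Qed.

Lemma large_all (X : M -> Prop) :
  (forall T, is_minimal T -> Defs.subset T X) -> is_large X.
Proof.
move=> H L SL NL.
have [T [Tm TL]] := exists_min SL NL.
have Tm' := Tm; case: Tm' => [_ [[t [Tt t0]] _]].
by exists t; split; [apply: (H T Tm) | split; [apply: TL|]].
Qed.

Lemma miss_of_nonlarge (X : M -> Prop) : ~ is_large X ->
  exists A, is_minimal A /\ ~ Defs.subset A X.
Proof.
move=> nl; apply: NNPP => H; apply: nl; apply: large_all => T Tm.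
by apply: NNPP => nT; apply: H; exists T.
Qed.

Lemma nonlarge_sum (A N K : M -> Prop) : is_minimal A -> is_submodule N ->
  is_submodule K -> ~ Defs.subset A N -> ~ Defs.subset A K -> ~ is_large (sum_sub N K).
Proof.
move=> Am SN SK nN nK; apply: (nonlarge_miss (sum_submodule SN SK) Am).
by move=> /(P_sum Am SN SK) [].
Qed.

Lemma vertex_min (C A : M -> Prop) : is_minimal C -> is_minimal A ->
  ~ Defs.subset A C -> vertex C.
Proof.
move=> Cm Am nAC; have Cm' := Cm; case: Cm' => [SC [NC _]].
split=> //; split=> //; exact: (nonlarge_miss SC Am nAC).
Qed.

Lemma sub_trans (X Y Z : M -> Prop) : Defs.subset X Y -> Defs.subset Y Z -> Defs.subset X Z.
Proof. by move=> H1 H2 t Xt; apply: H2; apply: H1. Qed.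

Lemma seteq_sym (X Y : M -> Prop) : seteq X Y -> seteq Y X.
Proof. by move=> H t; split => /H. Qed.

Lemma conn_of_not_two : ~ two_minimal M -> graph_connected M.
Proof.
move=> NT N K VN VK.
have VN' := VN; have VK' := VK.
case: VN' => [SN [NZN nlN]]; case: VK' => [SK [NZK nlK]].
have [C [Cm CN]] := exists_min SN NZN.
have [A [Am AN]] := miss_of_nonlarge nlN.
have [D [Dm DK]] := exists_min SK NZK.
have [B [Bm BK]] := miss_of_nonlarge nlK.
have Cm' := Cm; case: Cm' => [SC _].
have Dm' := Dm; case: Dm' => [SD _].
have AC : ~ Defs.subset A C by move=> h; apply: AN; exact: sub_trans h CN.
have BD : ~ Defs.subset B D by move=> h; apply: BK; exact: sub_trans h DK.
have VC := vertex_min Cm Am AC.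
have VD := vertex_min Dm Bm BD.
have s1 : step N C.
  split=> //; split=> //; case: (classic (seteq N C)) => h; [by left|right].
  by split=> //; split=> //; split=> //; apply: (nonlarge_sum Am SN SC).
have s3 : step D K.
  split=> //; split=> //; case: (classic (seteq D K)) => h; [by left|right].
  by split=> //; split=> //; split=> //; apply: (nonlarge_sum Bm SD SK).
have s2 : step C D.
  split=> //; split=> //; case: (classic (seteq C D)) => h; [by left|right].
  have [T [Tm [TC TD]]] : exists T, is_minimal T /\ ~ seteq T C /\ ~ seteq T D.
    apply: NNPP => H; apply: NT; exists C, D; split=> //; split=> //; split=> //.
    move=> N0 N0m; apply: NNPP => /not_or_and [h1 h2]; apply: H; by exists N0.
  split=> //; split=> //; split=> //; apply: (nonlarge_sum Tm SC SD).
    by move=> h'; apply: TC; apply: min_le_eq.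
  by move=> h'; apply: TD; apply: min_le_eq.
apply: rt_trans (rt_step _ _ _ _ s1) _.
exact: rt_trans (rt_step _ _ _ _ s2) (rt_step _ _ _ _ s3).
Qed.

Lemma two_not_conn : two_minimal M -> ~ graph_connected M.
Proof.
move=> [A [B [Am [Bm [nAB Hall]]]]] conn.
have VA : vertex A.
  apply: (vertex_min Am Bm) => h; apply: nAB; apply: seteq_sym; exact: min_le_eq.
have VB : vertex B.
  apply: (vertex_min Bm Am) => h; apply: nAB; exact: min_le_eq.
have inv : forall X Y, clos_refl_trans _ (@step R M) X Y -> Defs.subset A X -> Defs.subset A Y.
  move=> X Y; elim=> [X0 Y0 st | X0 | X0 Y0 Z0 _ IH1 _ IH2] //; last first.
    by move=> h; apply: IH2; apply: IH1.
  case: st => [VX [VY [eq|adj]]] AX.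
    by move=> t At; apply/(eq t); apply: AX.
  case: adj => [_ [_ [_ nl]]].
  have VY' := VY; case: VY' => [SY [NZY _]].
  have VX' := VX; case: VX' => [SX _].
  have [T [Tm TY]] := exists_min SY NZY.
  case: (Hall T Tm) => hT.
    by move=> t At; apply: TY; apply/(hT t).
  exfalso; apply: nl; apply: large_all => T' T'm.
  case: (Hall T' T'm) => h t T't.
    by apply: (sum_l SY); apply: AX; apply/(h t).
  by apply: (sum_r SX); apply: TY; apply/(hT t); apply/(h t).
have := inv A B (conn A B VA VB) (fun t h => h).
by move=> h; apply: nAB; apply: min_le_eq.
Qed.

Lemma two_complete_of_two : two_minimal M -> two_complete_components M.
Proof.
move=> [A [B [Am [Bm [nAB Hall]]]]].
have VA : vertex A.
  apply: (vertex_min Am Bm) => h; apply: nAB; apply: seteq_sym; exact: min_le_eq.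
have VB : vertex B.
  apply: (vertex_min Bm Am) => h; apply: nAB; exact: min_le_eq.
have bothL : forall X, Defs.subset A X -> Defs.subset B X -> is_large X.
  move=> X AX BX; apply: large_all => T Tm.
  case: (Hall T Tm) => h t Tt; [apply: AX | apply: BX]; exact/(h t).
have contains : forall X, vertex X -> Defs.subset A X \/ Defs.subset B X.
  move=> X [SX [NZX _]]; have [T [Tm TX]] := exists_min SX NZX.
  case: (Hall T Tm) => h; [left|right]; move=> t Ht; apply: TX; exact/(h t).
exists (fun X => vertex X /\ Defs.subset A X), (fun X => vertex X /\ Defs.subset B X).
split; first by exists A; split=> // t.
split; first by exists B; split=> // t.
split; first by move=> N [].
split; first by move=> N [].
split; first by move=> N VN; case: (contains N VN) => h; [left|right].
split.
  move=> N K [[_ [_ nlN]] AN] [_ BK] e; apply: nlN; apply: bothL => // t Bt.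
  by apply/(e t); apply: BK.
split.
  move=> N K [VN AN] [VK AK] ne; split=> //; split=> //; split=> //.
  have VN' := VN; case: VN' => [SN [_ nlN]].
  have VK' := VK; case: VK' => [SK [_ nlK]].
  apply: (nonlarge_sum Bm SN SK) => h.
    by apply: nlN; apply: bothL.
  by apply: nlK; apply: bothL.
split.
  move=> N K [VN BN] [VK BK] ne; split=> //; split=> //; split=> //.
  have VN' := VN; case: VN' => [SN [_ nlN]].
  have VK' := VK; case: VK' => [SK [_ nlK]].
  apply: (nonlarge_sum Am SN SK) => h.
    by apply: nlN; apply: bothL.
  by apply: nlK; apply: bothL.
move=> N K [VN AN] [VK BK] [_ [_ [_ nl]]]; apply: nl; apply: bothL.
  have VK' := VK; case: VK' => [SK _].
  exact: sub_trans AN (sum_l SK).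
have VN' := VN; case: VN' => [SN _].
exact: sub_trans BK (sum_r SN).
Qed.

End Main.

Lemma not_conn_of_complete (R : comPzRingType) (M : lmodType R) :
  two_complete_components M -> ~ graph_connected M.
Proof.
move=> [V1 [V2 [[N1 V1N1] [[N2 V2N2] [V1v [V2v [cov [disj [_ [_ noe]]]]]]]]]] conn.
have inv : forall X Y, clos_refl_trans _ (@step R M) X Y -> V1 X -> V1 Y.
  move=> X Y; elim=> [X0 Y0 st | X0 | X0 Y0 Z0 _ IH1 _ IH2] //; last first.
    by move=> h; apply: IH2; apply: IH1.
  case: st => [VX [VY h]] V1X.
  case: (cov Y0 VY) => // V2Y; exfalso.
  case: h => h; first exact: (disj X0 Y0 V1X V2Y h).
  exact: (noe X0 Y0 V1X V2Y h).
have := inv N1 N2 (conn N1 N2 (V1v N1 V1N1) (V2v N2 V2N2)) V1N1.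
by move=> h; apply: (disj N2 N2 h V2N2) => t.
Qed.

Theorem theorem2p6 (R : comPzRingType) (M : lmodType R) :
  module_nonzero M -> comultiplication_module M -> graph_nonnull M ->
  (~ graph_connected M <-> two_minimal M) /\
  (two_minimal M <-> two_complete_components M).
Proof.
move=> _ HC _.
split; split.
- by move=> nc; apply: NNPP => nt; apply: nc; exact: conn_of_not_two.
- exact: two_not_conn.
- exact: two_complete_of_two.
- move=> h; apply: NNPP => nt; apply: (not_conn_of_complete h).
  exact: conn_of_not_two.
Qed.
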